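(* Let $M\ge2$ and let $\mathcal{P}$ be a convex Class I source set on $\{1,\dots,M\}$ (so $\mathcal{P}$ contains the uniform distribution). Then for $D\in[0,1]$, \[ \epsilon^*_{\mathrm{IT}}(\mathcal{P},D)=\begin{cases}\log M-H(D)-D\log(M-1), & D<\frac{M-1}{M},\\ 0, & D\ge\frac{M-1}{M},\end{cases} \] where $H(D)=-D\log D-(1-D)\log(1-D)$ is the binary entropy function.
   Context: A source set is a nonempty set $\mathcal{P}$ of probability distributions on $\{1,\dots,M\}$; it is Class I if its convex hull contains the uniform distribution $(1/M,\dots,1/M)$. A mechanism is an $M\times M$ row-stochastic matrix $Q$ with entries $Q(j|i)$; its diagonal distortions are $D_i=1-Q(i|i)$. $Q$ is $(\mathcal{P},D)$-valid if $\sum_iP_iD_i\le D$ for all $P\in\mathcal{P}$ (average Hamming distortion); $\mathcal{Q}(\mathcal{P},D)$ is the set of these. For a source distribution $P$ and mechanism $Q$, $I(P;Q)$ is the mutual information $I(X;\hat X)$ when $X\sim P$ and $\hat X$ is drawn from $Q(\cdot|X)$. The worst-case information-theoretic leakage is $\epsilon_{\mathrm{IT}}(Q)=\max_{P\in\mathcal{P}}I(P;Q)$ and $\epsilon^*_{\mathrm{IT}}(\mathcal{P},D)=\min_{Q\in\mathcal{Q}(\mathcal{P},D)}\epsilon_{\mathrm{IT}}(Q)$. *)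

(* Defs.v *)
From HB Require Import structures.
From mathcomp Require Import all_boot all_order all_algebra.
From mathcomp Require Import all_classical all_reals all_analysis.
Set Implicit Arguments. Unset Strict Implicit. Unset Printing Implicit Defensive.
Import Order.TTheory GRing.Theory Num.Theory.
Local Open Scope classical_set_scope.
Local Open Scope ring_scope.

Section Leakage.
Variables (R : realType) (M : nat).

Definition is_distr (P : 'I_M -> R) : Prop :=
  (forall i, 0 <= P i) /\ \sum_(i < M) P i = 1.

Definition uniform_distr : 'I_M -> R := fun _ => M%:R^-1.

Definition source_set (S : set ('I_M -> R)) : Prop :=
  S !=set0 /\ (forall P, S P -> is_distr P).

Definition convex_source (S : set ('I_M -> R)) : Prop :=
  forall P1 P2 (t : R), S P1 -> S P2 -> 0 <= t <= 1 ->
    S (fun i => t * P1 i + (1 - t) * P2 i).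

(* uniform distribution lies in the convex hull of S *)
Definition class_I (S : set ('I_M -> R)) : Prop :=
  exists (n : nat) (p : 'I_n -> 'I_M -> R) (w : 'I_n -> R),
    (forall k, S (p k)) /\ (forall k, 0 <= w k) /\ \sum_(k < n) w k = 1 /\
    (forall i, \sum_(k < n) w k * p k i = uniform_distr i).

(* mechanism: Q i j = Q(j|i), row-stochastic *)
Definition mechanism (Q : 'M[R]_M) : Prop :=
  (forall i j, 0 <= Q i j) /\ (forall i, \sum_(j < M) Q i j = 1).

Definition diag_distortion (Q : 'M[R]_M) (i : 'I_M) : R := 1 - Q i i.

Definition valid (S : set ('I_M -> R)) (D : R) (Q : 'M[R]_M) : Prop :=
  mechanism Q /\
  forall P, S P -> \sum_(i < M) P i * diag_distortion Q i <= D.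

Definition out_marg (P : 'I_M -> R) (Q : 'M[R]_M) (j : 'I_M) : R :=
  \sum_(k < M) P k * Q k j.

(* mutual information I(X; Xhat), natural log, convention 0 log(.) = 0 *)
Definition mutual_info (P : 'I_M -> R) (Q : 'M[R]_M) : R :=
  \sum_(i < M) \sum_(j < M)
     (if P i * Q i j == 0 then 0
      else P i * Q i j * ln (Q i j / out_marg P Q j)).

(* worst-case leakage  max_{P in S} I(P;Q)  (taken as a supremum) *)
Definition eps_IT (S : set ('I_M -> R)) (Q : 'M[R]_M) : R :=
  sup [set mutual_info P Q | P in S].

End Leakage.

Definition binary_entropy (R : realType) (D : R) : R :=
  - (D * ln D) - (1 - D) * ln (1 - D).

(* Main.v *)
Require Import Defs.
From HB Require Import structures.
From mathcomp Require Import all_boot all_order all_algebra.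
From mathcomp Require Import all_classical all_reals all_analysis.
From mathcomp Require Import ring lra.
Import Order.TTheory GRing.Theory Num.Theory.
Local Open Scope classical_set_scope.
Local Open Scope ring_scope.

Section L.
Variable R : realType.

Lemma ln_le_sub1 (x : R) : 0 < x -> ln x <= x - 1.
Proof.
move=> x0; have := expR_ge1Dx (ln x); rewrite lnK ?posrE //; lra.
Qed.

Lemma gibbs_term (p t : R) : 0 <= p -> 0 <= t -> (0 < p -> 0 < t) ->
  p * ln t - p * ln p <= t - p.
Proof.
move=> p0 t0 pt; have [->|pne] := eqVneq p 0; first by rewrite !mul0r subr0 subr0.
have pp : 0 < p by rewrite lt0r pne.
have tp := pt pp.
rewrite -mulrBr -ln_div ?posrE //.
have h := @ln_le_sub1 _ (divr_gt0 tp pp).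
have := ler_wpM2l (ltW pp) h.
rewrite mulrBr mulr1 mulrCA mulfV ?mulr1 //; lra.
Qed.

Variables (M : nat).

Lemma sum_if (i : 'I_M) (x y : R) :
  \sum_(j < M) (if j == i then x else y) = x + (M.-1)%:R * y.
Proof.
rewrite (bigD1 i) //= eqxx; congr (_ + _).
rewrite (eq_bigr (fun _ => y)); last by move=> j /negbTE ->.
by rewrite sumr_const cardC1 card_ord mulr_natl.
Qed.

Lemma mi_simpl (P : 'I_M -> R) (Q : 'M[R]_M) : mutual_info P Q =
  \sum_(i < M) \sum_(j < M) P i * Q i j * ln (Q i j / out_marg P Q j).
Proof.
by apply: eq_bigr => i _; apply: eq_bigr => j _; case: eqP => [->|]; rewrite ?mul0r.
Qed.

Lemma le_row (Q : 'M[R]_M) i j : mechanism Q -> Q i j <= 1.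
Proof.
case=> Q0 Q1; rewrite -(Q1 i) (bigD1 j) //= lerDl; exact: sumr_ge0.
Qed.

Lemma le_row2 (Q : 'M[R]_M) i j : mechanism Q -> i != j -> Q i i + Q i j <= 1.
Proof.
case=> Q0 Q1 ij; rewrite -(Q1 i) (bigD1 i) //= (bigD1 j) 1?eq_sym //= addrA lerDl.
exact: sumr_ge0.
Qed.

Lemma marg_ge (P : 'I_M -> R) (Q : 'M[R]_M) i j : is_distr P -> mechanism Q ->
  P i * Q i j <= out_marg P Q j.
Proof.
case=> P0 _ [Q0 _]; rewrite /out_marg (bigD1 i) //= lerDl.
by apply: sumr_ge0 => k _; apply: mulr_ge0.
Qed.

Lemma marg_ge0 (P : 'I_M -> R) (Q : 'M[R]_M) j : is_distr P -> mechanism Q ->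
  0 <= out_marg P Q j.
Proof.
case=> P0 _ [Q0 _]; by apply: sumr_ge0 => k _; apply: mulr_ge0.
Qed.

Lemma marg_sum (P : 'I_M -> R) (Q : 'M[R]_M) : is_distr P -> mechanism Q ->
  \sum_j out_marg P Q j = 1.
Proof.
case=> _ P1 [_ Q1]; rewrite /out_marg exchange_big /= -{}P1.
by apply: eq_bigr => k _; rewrite -mulr_sumr Q1 mulr1.
Qed.

Lemma mi_decomp (P : 'I_M -> R) (Q : 'M[R]_M) : is_distr P -> mechanism Q ->
  mutual_info P Q = \sum_i P i * (\sum_j Q i j * ln (Q i j))
     - \sum_j out_marg P Q j * ln (out_marg P Q j).
Proof.
move=> dP mQ; rewrite mi_simpl.
have -> : \sum_j out_marg P Q j * ln (out_marg P Q j) =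
   \sum_i \sum_j P i * Q i j * ln (out_marg P Q j).
  rewrite exchange_big /=; apply: eq_bigr => j _.
  by rewrite /out_marg big_distrl.
rewrite -sumrB; apply: eq_bigr => i _; rewrite mulr_sumr -sumrB.
apply: eq_bigr => j _; rewrite mulrA -mulrBr.
have [->|ne] := eqVneq (P i * Q i j) 0; first by rewrite !mul0r.
have [P0 _] := dP; have [Q0 _] := mQ.
have pos : 0 < P i * Q i j by rewrite lt0r ne mulr_ge0.
have Qp : 0 < Q i j.
  by rewrite lt0r Q0 andbT; apply: contra ne => /eqP ->; rewrite mulr0.
have mp : 0 < out_marg P Q j := lt_le_trans pos (@marg_ge P Q i j dP mQ).
by rewrite ln_div ?posrE.
Qed.


Lemma entropy_bound (m : 'I_M -> R) : (0 < M)%N -> (forall j, 0 <= m j) ->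
  \sum_j m j = 1 -> - \sum_j m j * ln (m j) <= ln M%:R.
Proof.
move=> M0 m0 m1.
have Mp : 0 < (M%:R : R) by rewrite ltr0n.
have h : \sum_j (m j * ln (M%:R^-1) - m j * ln (m j)) <= \sum_j (M%:R^-1 - m j).
  apply: ler_sum => j _; apply: gibbs_term => //;
    by [apply: m0 | rewrite invr_ge0 ltW | move=> _; rewrite invr_gt0].
move: h; rewrite !sumrB -big_distrl /= m1 mul1r sumr_const card_ord.
rewrite -[M%:R^-1 *+ M]mulr_natr mulVf ?gt_eqF // lnV ?posrE //; lra.
Qed.

Lemma rowent_le0 (Q : 'M[R]_M) i : mechanism Q -> \sum_j Q i j * ln (Q i j) <= 0.
Proof.
move=> mQ; apply: sumr_le0 => j _; apply: mulr_ge0_le0; first by case: mQ.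
exact/ln_le0/le_row.
Qed.

Lemma mi_ub (P : 'I_M -> R) (Q : 'M[R]_M) : (0 < M)%N -> is_distr P -> mechanism Q ->
  mutual_info P Q <= ln M%:R.
Proof.
move=> M0 dP mQ; rewrite mi_decomp //.
have h1 : \sum_i P i * (\sum_j Q i j * ln (Q i j)) <= 0.
  apply: sumr_le0 => i _; apply: mulr_ge0_le0; first by case: dP.
  exact: rowent_le0.
have h2 := @entropy_bound _ M0 (fun j => @marg_ge0 P Q j dP mQ) (@marg_sum P Q dP mQ).
lra.
Qed.

Lemma uniform_is_distr : (0 < M)%N -> is_distr (uniform_distr R (M:=M)).
Proof.
move=> M0; split; first by move=> i; rewrite /uniform_distr invr_ge0 ler0n.
rewrite /uniform_distr sumr_const card_ord -[_^-1 *+ M]mulr_natr mulVf // pnatr_eq0 -lt0n //.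
Qed.


Lemma conv_in (S : set ('I_M -> R)) : convex_source S ->
  forall n (p : 'I_n -> 'I_M -> R) (w : 'I_n -> R),
  (forall k, S (p k)) -> (forall k, 0 <= w k) -> \sum_(k < n) w k = 1 ->
  S (fun i => \sum_(k < n) w k * p k i).
Proof.
move=> cS; elim=> [|n IH] p w Sp w0 w1.
  by move: w1; rewrite big_ord0 => /eqP; rewrite eq_sym oner_eq0.
move: (w1); rewrite big_ord_recr /= => w1'.
set wl := w ord_max in w1'.
have rest0 : 0 <= \sum_(k < n) w (widen_ord (leqnSn n) k) by apply: sumr_ge0.
have [wl1|wl1] := eqVneq wl 1.
  have eq0 : forall k : 'I_n, w (widen_ord (leqnSn n) k) = 0.
    move=> k; apply: (@psumr_eq0P _ _ xpredT (fun k => w (widen_ord (leqnSn n) k))) => //.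
    by rewrite -wl1 in w1'; lra.
  have -> : (fun i => \sum_(k < n.+1) w k * p k i) = p ord_max.
    apply: funext => i; rewrite big_ord_recr /= big1 ?add0r.
      by rewrite -/wl wl1 mul1r.
    by move=> k _; rewrite eq0 mul0r.
  exact: Sp.
have wl0 : 0 <= wl by apply: w0.
have tp : 0 < 1 - wl by rewrite lt0r; apply/andP; split; [rewrite subr_eq0 eq_sym | ]; lra.
have S1 : S (fun i => \sum_(k < n) (w (widen_ord (leqnSn n) k) / (1 - wl)) *
                                     p (widen_ord (leqnSn n) k) i).
  apply: IH => [k|k|]; first exact: Sp.
    by apply: divr_ge0 => //; apply: ltW.
  rewrite -mulr_suml (_ : \sum_(k < n) _ = 1 - wl); first by rewrite mulfV ?gt_eqF.
  by rewrite -/wl in w1'; lra.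
have := cS _ _ (1 - wl) S1 (Sp ord_max).
have -> : (fun i => (1 - wl) * (\sum_(k < n) (w (widen_ord (leqnSn n) k) / (1 - wl)) *
          p (widen_ord (leqnSn n) k) i) + (1 - (1 - wl)) * p ord_max i) =
          (fun i => \sum_(k < n.+1) w k * p k i).
  apply: funext => i; rewrite big_ord_recr /= mulr_sumr; congr (_ + _); last by rewrite -/wl; congr (_ * _); ring.
  apply: eq_bigr => k _; rewrite mulrA mulrCA mulfV ?gt_eqF // mulr1 //.
apply; apply/andP; split; lra.
Qed.


Lemma fano (Q : 'M[R]_M) (a b : R) : (0 < M)%N -> mechanism Q -> 0 < a -> 0 <= b ->
  a + (M.-1)%:R * b = 1 -> (forall i j, i != j -> 0 < Q i j -> 0 < b) ->
  ln M%:R + ln b + (\sum_i uniform_distr R i * Q i i) * (ln a - ln b)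
    <= mutual_info (uniform_distr R (M:=M)) Q.
Proof.
move=> M0 mQ a0 b0 ab1 bpos.
set U := uniform_distr R (M:=M).
have dU : is_distr U := uniform_is_distr M0.
have Mp : 0 < (M%:R : R) by rewrite ltr0n.
have U0 : forall i, 0 < U i by move=> i; rewrite /U /uniform_distr invr_gt0.
have [Q0 Q1] := mQ.
pose mm j := out_marg U Q j.
pose c (i j : 'I_M) := if i == j then a else b.
have c0 : forall i j, 0 <= c i j by move=> i j; rewrite /c; case: eqP => _ //; apply: ltW.
have ppos : forall i j, U i * Q i j != 0 -> 0 < U i * Q i j /\ 0 < Q i j /\ 0 < mm j /\ 0 < c i j.
  move=> i j ne.
  have pos : 0 < U i * Q i j by rewrite lt0r ne mulr_ge0 // ltW.
  have Qp : 0 < Q i j.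
    by rewrite lt0r Q0 andbT; apply: contra ne => /eqP ->; rewrite mulr0.
  split=> //; split=> //; split; first exact: lt_le_trans pos (@marg_ge U Q i j dU mQ).
  rewrite /c; case: eqP => [//|/eqP ij]; exact: bpos ij Qp.
have G : \sum_i \sum_j (U i * Q i j * ln (mm j * c i j) - U i * Q i j * ln (U i * Q i j))
    <= \sum_i \sum_j (mm j * c i j - U i * Q i j).
  apply: ler_sum => i _; apply: ler_sum => j _; apply: gibbs_term.
  - by rewrite mulr_ge0 // ltW.
  - by rewrite mulr_ge0 // (@marg_ge0 U Q j dU mQ).
  - by move=> pp; have [_ [_ [? ?]]] := ppos i j (lt0r_neq0 pp); apply: mulr_gt0.
have R0 : \sum_i \sum_j (mm j * c i j - U i * Q i j) = 0.
  under eq_bigr do rewrite sumrB.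
  rewrite sumrB exchange_big /=.
  have -> : \sum_j \sum_i mm j * c i j = 1.
    rewrite -(@marg_sum U Q dU mQ); apply: eq_bigr => j _.
    by rewrite -mulr_sumr sum_if ab1 mulr1.
  have -> : \sum_i \sum_j U i * Q i j = 1.
    by case: dU => _ <-; apply: eq_bigr => i _; rewrite -mulr_sumr Q1 mulr1.
  by rewrite subrr.
have T : forall i j, U i * Q i j * ln (mm j * c i j) - U i * Q i j * ln (U i * Q i j) =
   U i * Q i j * ln b + (if j == i then U i * Q i j * (ln a - ln b) else 0)
   + U i * Q i j * ln M%:R - U i * Q i j * ln (Q i j / out_marg U Q j).
  move=> i j.
  have -> : U i * Q i j * ln b + (if j == i then U i * Q i j * (ln a - ln b) else 0) =
            U i * Q i j * ln (c i j).
    by rewrite /c eq_sym; case: eqP => _; ring.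
  have [->|ne] := eqVneq (U i * Q i j) 0; first by rewrite !mul0r; ring.
  have [pp [Qp [mp cp]]] := ppos i j ne.
  rewrite lnM ?posrE // lnM ?posrE // ln_div ?posrE //.
  rewrite /U /uniform_distr lnV ?posrE //.
  rewrite -/(uniform_distr R i) -/U -/(mm j); ring.
have sP : \sum_i \sum_j U i * Q i j = 1.
  by case: dU => _ <-; apply: eq_bigr => i _; rewrite -mulr_sumr Q1 mulr1.
have sA : \sum_i \sum_j U i * Q i j * ln b = ln b.
  by rewrite -[RHS]mul1r -sP big_distrl /=; apply: eq_bigr => i _; rewrite big_distrl.
have sB : \sum_i \sum_j (if j == i then U i * Q i j * (ln a - ln b) else 0) =
     (\sum_i U i * Q i i) * (ln a - ln b).
  rewrite big_distrl /=; apply: eq_bigr => i _.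
  by rewrite -big_mkcond big_pred1_eq.
have sC : \sum_i \sum_j U i * Q i j * ln M%:R = ln M%:R.
  by rewrite -[RHS]mul1r -sP big_distrl /=; apply: eq_bigr => i _; rewrite big_distrl.
move: G; rewrite R0.
under eq_bigr do under eq_bigr do rewrite T.
under eq_bigr do rewrite sumrB !big_split /=.
rewrite sumrB !big_split /= sA sB sC -mi_simpl; lra.
Qed.


Definition Qs (a b : R) : 'M[R]_M := \matrix_(i, j) (if i == j then a else b).

Lemma Qs_row a b i : \sum_j Qs a b i j = a + (M.-1)%:R * b.
Proof.
rewrite -(sum_if i); apply: eq_bigr => j _; by rewrite mxE eq_sym.
Qed.

Lemma Qs_col a b j : \sum_i Qs a b i j = a + (M.-1)%:R * b.
Proof.
rewrite -(sum_if j); apply: eq_bigr => i _; by rewrite mxE.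
Qed.

Lemma Qs_ent a b i : \sum_j Qs a b i j * ln (Qs a b i j) = a * ln a + (M.-1)%:R * (b * ln b).
Proof.
rewrite -(sum_if i); apply: eq_bigr => j _; rewrite mxE eq_sym; by case: eqP.
Qed.

End L.

Theorem lemma3 (R : realType) (M : nat) (S : set ('I_M -> R)) (D : R) :
  (2 <= M)%N ->
  source_set S -> convex_source S -> class_I S ->
  0 <= D <= 1 ->
  let V := if D < (M%:R - 1) / M%:R
           then ln M%:R - binary_entropy D - D * ln (M%:R - 1)
           else 0 in
  (exists Q : 'M[R]_M, valid S D Q /\ eps_IT S Q = V) /\
  (forall Q : 'M[R]_M, valid S D Q -> V <= eps_IT S Q).
Proof.
move=> M2 [Sne Sd] cS [n [p [w [Sp [w0 [w1 wU]]]]]] /andP[D0 D1] V.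
have M0 : (0 < M)%N := ltnW M2.
set U := uniform_distr R (M:=M).
have dU : is_distr U := uniform_is_distr R M M0.
have SU : S U.
  have := @conv_in R M S cS n p w Sp w0 w1.
  have -> // : (fun i => \sum_(k < n) w k * p k i) = U by apply: funext => i; exact: wU.
have Mp : 0 < (M%:R : R) by rewrite ltr0n.
have M1 : 1 < (M%:R : R) by rewrite ltr1n.
have Mm1 : (M.-1)%:R = M%:R - 1 :> R by rewrite -{2}(prednK M0) -natr1 addrK.
have UE : forall i, U i = M%:R^-1 by [].
have sU : \sum_i U i = 1 by case: dU.
have lbU : forall Q, mechanism Q -> mutual_info U Q <= eps_IT S Q.
  move=> Q mQ; apply: ub_le_sup; last by exists U.
  by exists (ln M%:R) => _ [P SP <-]; apply: mi_ub => //; apply: Sd.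
have [hD|hD] := boolP (D < (M%:R - 1) / M%:R).
- have hDM : D * M%:R < M%:R - 1 by rewrite -ltr_pdivlMr.
  have Dl1 : D < 1 by nra.
  set b := D / (M%:R - 1).
  have Mm0 : 0 < (M%:R : R) - 1 by lra.
  have b0 : 0 <= b by apply: divr_ge0 => //; lra.
  have ab1 : 1 - D + (M.-1)%:R * b = 1 by rewrite Mm1 /b mulrCA mulfV ?gt_eqF //; lra.
  have lnab : ln b <= ln (1 - D).
    have [D0'|Dne] := eqVneq D 0.
      by rewrite /b D0' mul0r ln0 // subr0 ln1.
    have Dp : 0 < D by rewrite lt0r Dne.
    rewrite ler_ln ?posrE; [| by apply: divr_gt0 | lra].
    rewrite ler_pdivrMr //; nra.
  have Dlnb : D * ln b = D * ln D - D * ln (M%:R - 1).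
    have [->|Dne] := eqVneq D 0; first by rewrite !mul0r subrr.
    have Dp : 0 < D by rewrite lt0r Dne.
    by rewrite /b ln_div ?posrE // mulrBr.
  have cV : (1 - D) * ln (1 - D) + (M.-1)%:R * (b * ln b) + ln M%:R = V.
    rewrite /V hD /binary_entropy mulrA Mm1 /b mulrCA mulfV ?gt_eqF // mulr1 -/b Dlnb.
    ring.
  split.
  + exists (Qs R M (1 - D) b).
    have mQ : mechanism (Qs R M (1 - D) b).
      split; first by move=> i j; rewrite mxE; case: eqP => _ //; lra.
      by move=> i; rewrite Qs_row ab1.
    have ubP : forall P, is_distr P -> mutual_info P (Qs R M (1 - D) b) <= V.
      move=> P dP; rewrite mi_decomp //.
      under eq_bigr do rewrite Qs_ent.
      rewrite -big_distrl /=; case: (dP) => _ ->; rewrite mul1r -cV.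
      have := @entropy_bound R M _ M0 (fun j => @marg_ge0 R M P _ j dP mQ)
                 (@marg_sum R M P _ dP mQ).
      lra.
    split.
      split=> // P SP; rewrite /diag_distortion.
      under eq_bigr do rewrite mxE eqxx (_ : 1 - (1 - D) = D) ?subKr //.
      by rewrite -big_distrl /=; case: (Sd P SP) => _ ->; rewrite mul1r.
    apply/le_anti/andP; split.
      apply: ge_sup; first by case: Sne => P0 SP0; exists (mutual_info P0 (Qs R M (1 - D) b)), P0.
      by move=> _ [P SP <-]; apply: ubP; apply: Sd.
    apply: ub_le_sup.
      by exists V => _ [P SP <-]; apply: ubP; apply: Sd.
    exists U => //.
    rewrite mi_decomp //.
    under eq_bigr do rewrite Qs_ent.
    rewrite -big_distrl /= sU mul1r -cV.
    have mmU : forall j, out_marg U (Qs R M (1 - D) b) j = M%:R^-1.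
      move=> j; rewrite /out_marg.
      under eq_bigr do rewrite UE.
      by rewrite -mulr_sumr Qs_col ab1 mulr1.
    under [X in _ - X = _]eq_bigr do rewrite mmU.
    rewrite sumr_const card_ord -[(_ * _) *+ M]mulr_natr lnV ?posrE //.
    by field; rewrite gt_eqF.
  + move=> Q [mQ vQ].
    apply: le_trans (lbU Q mQ).
    have hv := vQ U SU.
    set s := \sum_i U i * Q i i.
    have hs : 1 - s <= D.
      move: hv; rewrite /diag_distortion.
      under eq_bigr do rewrite mulrBr mulr1.
      by rewrite sumrB sU.
    have bpos : forall i j, i != j -> 0 < Q i j -> 0 < b.
      move=> i j ij Qp; apply: divr_gt0 => //.
      have [Q0 _] := mQ.
      have h2 := @le_row2 R M Q i j mQ ij.
      move: hv; rewrite (bigD1 i) //= /diag_distortion => hv.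
      have : 0 <= \sum_(k < M | k != i) U k * (1 - Q k k).
        apply: sumr_ge0 => k _; apply: mulr_ge0; first by rewrite UE invr_ge0 ltW.
        by have := @le_row R M Q k k mQ; lra.
      have : 0 < U i * (1 - Q i i) by apply: mulr_gt0; [rewrite UE invr_gt0 | lra].
      lra.
    have F := @fano R M Q (1 - D) b M0 mQ ltac:(lra) b0 ab1 bpos.
    rewrite -/U -/s in F.
    have h3 : (1 - D) * (ln (1 - D) - ln b) <= s * (ln (1 - D) - ln b).
      by apply: ler_wpM2r; lra.
    rewrite /V hD /binary_entropy.
    have := Dlnb.
    lra.
-
  have hD' : (M%:R - 1) / M%:R <= D by rewrite leNgt.
  have VE : V = 0 by rewrite /V (negbTE hD).
  rewrite VE.
  have Ma : M%:R^-1 + (M.-1)%:R * M%:R^-1 = 1 :> R.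
    by rewrite Mm1 -{1}(mul1r M%:R^-1) -mulrDl addrC subrK mulfV ?gt_eqF.
  split.
  + pose Qc : 'M[R]_M := \matrix_(i, j) M%:R^-1.
    have mQ : mechanism Qc.
      split; first by move=> i j; rewrite mxE invr_ge0 ltW.
      move=> i; under eq_bigr do rewrite mxE.
      by rewrite sumr_const card_ord -[_ *+ M]mulr_natr mulVf ?gt_eqF.
    have I0 : forall P, is_distr P -> mutual_info P Qc = 0.
      move=> P dP; rewrite mi_simpl; apply: big1 => i _; apply: big1 => j _.
      have -> : out_marg P Qc j = M%:R^-1.
        rewrite /out_marg; under eq_bigr do rewrite mxE.
        by rewrite -big_distrl /=; case: dP => _ ->; rewrite mul1r.
      by rewrite mxE mulfV ?gt_eqF ?invr_gt0 // ln1 mulr0.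
    exists Qc; split.
      split=> // P SP; rewrite /diag_distortion.
      under eq_bigr do rewrite mxE.
      rewrite -big_distrl /=; case: (Sd P SP) => _ ->; rewrite mul1r.
      by move: hD'; rewrite mulrBl mulfV ?gt_eqF // mul1r.
    apply/le_anti/andP; split.
      apply: ge_sup; first by case: Sne => P0 SP0; exists (mutual_info P0 Qc), P0.
      by move=> _ [P SP <-]; rewrite I0 //; apply: Sd.
    apply: ub_le_sup.
      by exists 0 => _ [P SP <-]; rewrite I0 //; apply: Sd.
    by exists U => //; rewrite I0.
  + move=> Q [mQ _]; apply: le_trans (lbU Q mQ).
    have F := @fano R M Q M%:R^-1 M%:R^-1 M0 mQ ltac:(by rewrite invr_gt0)
       ltac:(by rewrite invr_ge0 ltW) Ma ltac:(by move=> *; rewrite invr_gt0).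
    by move: F; rewrite subrr mulr0 addr0 lnV ?posrE // addrN.
Qed.
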